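(* Let $v_1\ge v_2>0$, $m\in\mathbb{Z}_{\ge1}$, $\alpha\in(0,1)$ and $0<b\le m$; put $\delta=\frac{2m+1}{m+1}$ and $\sigma=\frac{2m+1}{m}$. Let $(X,Y)$ be a strategy profile with $\mathbf{E}(X)=m+\alpha$ and $\mathbf{E}(Y)=b$ such that: $\frac{m(m+1)}{b}=\frac{v_1}{2}$; $(X,Y)$ is a Nash equilibrium of the General Lotto game $\Gamma(m+\alpha,b)$; $Y=\left(1-\frac bm\right)\delta_0+\frac bmU_{\mathrm{E}}^m$; and (a) if $0<\alpha\le\frac{m+1}{2m+1}$, $X=\lambda_{\mathrm{O}}\big((1-\alpha)U_{\mathrm{O}}^m+\alpha U_{\mathrm{O}}^{m+1}\big)+\lambda_{\mathrm{E}}\big((1-\alpha)U_{\mathrm{E}}^m+\alpha U_{\mathrm{O}}^{m+1}\big)+\sum_{j=1}^m\lambda_j\big(\alpha\delta V_j^m+(1-\alpha\delta)U_{\mathrm{O}}^m\big)+\sum_{j=1}^m\kappa_j\big(\alpha\delta V_j^m+(1-\alpha\delta)U_{\mathrm{E}}^m\big)$; (b) if $\frac{m+1}{2m+1}<\alpha<1$, $X=\lambda_{\mathrm{O}}\big((1-\alpha)U_{\mathrm{O}}^m+\alpha U_{\mathrm{O}}^{m+1}\big)+\lambda_{\mathrm{E}}\big((1-\alpha)U_{\mathrm{E}}^m+\alpha U_{\mathrm{O}}^{m+1}\big)+\sum_{j=1}^m\lambda_j\big((1-\alpha)\sigma V_j^m+(1-(1-\alpha)\sigma)U_{\mathrm{O}}^{m+1}\big)$,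 with $\kappa_1=\dots=\kappa_m:=0$; where all coefficients $\lambda_{\mathrm{O}},\lambda_{\mathrm{E}},\lambda_j,\kappa_j$ are nonnegative and sum to $1$, $\lambda_{\mathrm{E}}=0$ and $\sum_{j=1}^m\kappa_j=0$ if $m>b$, and $\frac{m+1-\alpha}{m(m+1)}-\frac{2}{v_2}=\lambda_{\mathrm{E}}\frac{1-\alpha}{m(m+1)}+\sum_{j=1}^m\kappa_j\frac{1}{m+1}\left(\frac{1-\alpha}{m}-\frac{\alpha}{m+1}\right)$. Then $(X,Y)$ is a Nash equilibrium of the discrete all-pay auction with valuations $v_1,v_2$.
   Context: Discrete all-pay auction: two players, 1 and 2, value a prize at $v_1$ and $v_2$ respectively, where $v_1\ge v_2>0$. A (mixed) strategy is a probability distribution on $\mathbb{Z}_{\ge 0}$ with finite mean, identified with a $\mathbb{Z}_{\ge0}$-valued random variable; the two players' choices are independent. If player 1 uses $X$ and player 2 uses $Y$, the expected payoffs are $P^1(X,Y)=v_1\Pr(X>Y)+\frac{v_1}{2}\Pr(X=Y)-\mathbf{E}(X)$ and $P^2(Y,X)=v_2\Pr(Y>X)+\frac{v_2}{2}\Pr(X=Y)-\mathbf{E}(Y)$. A Nash equilibrium of the all-pay auction is a pair $(X,Y)$ with $P^1(X,Y)\ge P^1(X',Y)$ and $P^2(Y,X)\ge P^2(Y',X)$ for all strategies $X',Y'$. $\delta_j$ denotes the point mass at $j$; $\lambda A+(1-\lambda)B$ denotes the mixture of distributions $A$ and $B$ (similarly for longer convex combinations). Discrete General Lotto game: for reals $a,b\ge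 0$, in $\Gamma(a,b)$ player 1 chooses a distribution $X$ on $\mathbb{Z}_{\ge0}$ with $\mathbf{E}(X)=a$ and player 2 chooses a distribution $Y$ on $\mathbb{Z}_{\ge 0}$ with $\mathbf{E}(Y)=b$ (independently); the payoff to player 1 is $H(X,Y)=\Pr(X>Y)-\Pr(X<Y)$ and to player 2 is $H(Y,X)=-H(X,Y)$. A Nash equilibrium of $\Gamma(a,b)$ is a pair $(X,Y)$ from these strategy sets such that neither player can increase her payoff by switching to another strategy in her own strategy set. Special distributions: for $m\ge1$, $U_{\mathrm{O}}^m$ is the uniform distribution on $\{1,3,\dots,2m-1\}$; for $m\ge0$, $U_{\mathrm{E}}^m$ is the uniform distribution on $\{0,2,\dots,2m\}$; for $m\ge1$ and $1\le j\le m$, $V_j^m=\sum_{i=1}^{j-1}\frac{2}{2m+1}\delta_{2i-1}+\frac{1}{2m+1}\delta_{2j-1}+\sum_{i=j}^{m}\frac{2}{2m+1}\delta_{2i}$. *)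

(* Defs.v *)
From Stdlib Require Import Reals Lra Arith Bool.
From Coquelicot Require Import Coquelicot.
Open Scope R_scope.

Definition strategy (p : nat -> R) : Prop :=
  (forall n, 0 <= p n) /\ is_series p 1 /\ ex_series (fun n => INR n * p n).

Definition mean (p : nat -> R) : R := Series (fun n => INR n * p n).

Fixpoint lt_mass (q : nat -> R) (i : nat) : R :=
  match i with O => 0 | S k => lt_mass q k + q k end.

Definition PrGt (p q : nat -> R) : R := Series (fun i => p i * lt_mass q i).
Definition PrEq (p q : nat -> R) : R := Series (fun i => p i * q i).

Definition P1 (v1 : R) (p q : nat -> R) : R :=
  v1 * PrGt p q + v1 / 2 * PrEq p q - mean p.
Definition P2 (v2 : R) (q p : nat -> R) : R :=
  v2 * PrGt q p + v2 / 2 * PrEq p q - mean q.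

Definition allpay_Nash (v1 v2 : R) (p q : nat -> R) : Prop :=
  strategy p /\ strategy q /\
  (forall p', strategy p' -> P1 v1 p' q <= P1 v1 p q) /\
  (forall q', strategy q' -> P2 v2 q' p <= P2 v2 q p).

Definition H (p q : nat -> R) : R := PrGt p q - PrGt q p.

Definition lotto_Nash (a b : R) (p q : nat -> R) : Prop :=
  strategy p /\ mean p = a /\ strategy q /\ mean q = b /\
  (forall p', strategy p' -> mean p' = a -> H p' q <= H p q) /\
  (forall q', strategy q' -> mean q' = b -> H q' p <= H q p).

Definition dirac (j : nat) : nat -> R := fun n => if Nat.eqb n j then 1 else 0.

Definition UO (m : nat) : nat -> R :=
  fun n => if andb (Nat.odd n) (Nat.ltb n (2 * m)) then / INR m else 0.

Definition UE (m : nat) : nat -> R :=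
  fun n => if andb (Nat.even n) (Nat.leb n (2 * m)) then / INR (m + 1) else 0.

(* V_j^m = sum_{i=1}^{j-1} 2/(2m+1) delta_{2i-1} + 1/(2m+1) delta_{2j-1}
           + sum_{i=j}^{m} 2/(2m+1) delta_{2i} *)
Definition V (j m : nat) : nat -> R :=
  fun n =>
    if Nat.odd n then
      (let i := Nat.div2 (n + 1) in
       if Nat.ltb i j then 2 / INR (2 * m + 1)
       else if Nat.eqb i j then 1 / INR (2 * m + 1) else 0)
    else
      (let i := Nat.div2 n in
       if andb (Nat.leb j i) (Nat.leb i m) then 2 / INR (2 * m + 1) else 0).

Fixpoint sumR (n : nat) (f : nat -> R) : R :=
  match n with O => 0 | S k => sumR k f + f (S k) end.

(* Main.v *)
Require Import Defs.
From Stdlib Require Import Reals.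
From Coquelicot Require Import Coquelicot.
From Stdlib Require Import Lra Arith Bool Lia.
Open Scope R_scope.

Lemma lt_mass_sum (p : nat -> R) n : lt_mass p (S n) = sum_n p n.
Proof.
  induction n.
  - simpl. rewrite sum_O. ring.
  - change (lt_mass p (S (S n))) with (lt_mass p (S n) + p (S n)).
    rewrite IHn, sum_Sn. reflexivity.
Qed.

Lemma strat_bounds p : strategy p -> forall n, 0 <= lt_mass p n <= 1 /\ 0 <= p n <= 1.
Proof.
  intros [hp [hs _]].
  assert (Hle : forall n, lt_mass p n <= 1).
  { intros [|n]. simpl; lra. rewrite lt_mass_sum.
    apply (is_lim_seq_incr_compare (sum_n p)).
    - exact hs.
    - intros k. rewrite sum_Sn. unfold plus; simpl. specialize (hp (S k)). lra. }
  assert (Hge : forall n, 0 <= lt_mass p n).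
  { induction n; simpl. lra. specialize (hp n). lra. }
  intros n; split; [split; auto|]. split; auto.
  specialize (Hle (S n)). specialize (Hge n). simpl in Hle. lra.
Qed.

Lemma payoff_series (p L E : nat -> R) (c1 c2 : R) :
  strategy p -> (forall n, 0 <= L n <= 1) -> (forall n, 0 <= E n <= 1) ->
  ex_series (fun n => p n * (c1 * L n + c2 * E n - INR n)) /\
  c1 * Series (fun n => p n * L n) + c2 * Series (fun n => p n * E n) - mean p
  = Series (fun n => p n * (c1 * L n + c2 * E n - INR n)).
Proof.
  intros hs hL hE. destruct hs as [hp [hsum hmean]].
  assert (hex : ex_series p) by (exists 1; exact hsum).
  assert (e1 : ex_series (fun n => p n * L n)).
  { apply (@ex_series_le R_AbsRing R_CompleteNormedModule _ p); auto. intros n. unfold norm; simpl. specialize (hp n); specialize (hL n).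
    change (abs (p n * L n) <= p n). unfold abs; simpl. rewrite Rabs_pos_eq; nra. }
  assert (e2 : ex_series (fun n => p n * E n)).
  { apply (@ex_series_le R_AbsRing R_CompleteNormedModule _ p); auto. intros n. unfold norm; simpl. specialize (hp n); specialize (hE n).
    change (abs (p n * E n) <= p n). unfold abs; simpl. rewrite Rabs_pos_eq; nra. }
  assert (e1' : ex_series (fun n => c1 * (p n * L n))) by (apply (ex_series_scal_l c1 _ e1)).
  assert (e2' : ex_series (fun n => c2 * (p n * E n))) by (apply (ex_series_scal_l c2 _ e2)).
  assert (e12 : ex_series (fun n => c1 * (p n * L n) + c2 * (p n * E n))) by (apply (ex_series_plus _ _ e1' e2')).
  assert (e3 : ex_series (fun n => c1 * (p n * L n) + c2 * (p n * E n) - INR n * p n)) by (apply (ex_series_minus _ _ e12 hmean)).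
  split.
  - eapply ex_series_ext; [|exact e3]. intros n; simpl. ring.
  - unfold mean. rewrite <- !Series_scal_l.
    rewrite <- Series_plus by auto. rewrite <- Series_minus by auto.
    apply Series_ext. intros n. ring.
Qed.

Lemma series_le_const (p F : nat -> R) (M : R) :
  strategy p -> ex_series (fun n => p n * F n) -> (forall n, F n <= M) ->
  Series (fun n => p n * F n) <= M.
Proof.
  intros [hp [hsum _]] hex hF.
  assert (hS : Series (fun n => M * p n) = M).
  { rewrite Series_scal_l. rewrite (is_series_unique _ _ hsum). ring. }
  rewrite <- hS.
  assert (hexM : ex_series (fun n => M * p n)) by (apply (ex_series_scal_l M p); exists 1; exact hsum).
  assert (0 <= Series (fun n => M * p n - p n * F n)).
  { replace 0 with (Series (fun n : nat => 0 * p n)) by (rewrite Series_scal_l; ring).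
    apply Series_le. intros n. specialize (hp n); specialize (hF n). nra.
    apply (ex_series_minus _ _ hexM hex). }
  rewrite Series_minus in H; auto. lra.
Qed.

Definition Gf (f : nat -> R) n := lt_mass f n + f n / 2.
Definition good (m : nat) (f : nat -> R) (s : R) :=
  (forall i, Gf f i - Gf f 0 <= s * INR i / 2) /\
  (forall k, (k <= m)%nat -> Gf f (2 * k) - Gf f 0 = s * INR (2 * k) / 2).

Lemma lt_mass_lin f g a b i :
  lt_mass (fun n => a * f n + b * g n) i = a * lt_mass f i + b * lt_mass g i.
Proof. induction i; simpl. ring. rewrite IHi. ring. Qed.

Lemma lt_mass_ext f g i : (forall n, f n = g n) -> lt_mass f i = lt_mass g i.
Proof. intros H; induction i; simpl; auto. rewrite IHi, H. ring. Qed.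

Lemma Gf_lin f g a b i :
  Gf (fun n => a * f n + b * g n) i = a * Gf f i + b * Gf g i.
Proof. unfold Gf. rewrite lt_mass_lin. field. Qed.

Lemma good_ext m f g s : (forall n, f n = g n) -> good m f s -> good m g s.
Proof.
  intros H [h1 h2]. unfold good, Gf in *.
  split; intros; rewrite <- !(lt_mass_ext f g) by auto; rewrite <- !H; auto.
Qed.

Lemma good_lin m f g s t a b : good m f s -> good m g t -> 0 <= a -> 0 <= b ->
  good m (fun n => a * f n + b * g n) (a * s + b * t).
Proof.
  intros [f1 f2] [g1 g2] ha hb. split.
  - intros i. rewrite !Gf_lin. specialize (f1 i); specialize (g1 i).
    apply Rmult_le_compat_l with (r := a) in f1; auto.
    apply Rmult_le_compat_l with (r := b) in g1; auto. nra.
  - intros k hk. rewrite !Gf_lin. specialize (f2 k hk); specialize (g2 k hk).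
    replace (a * Gf f (2 * k) + b * Gf g (2 * k) - (a * Gf f 0 + b * Gf g 0))
      with (a * (Gf f (2 * k) - Gf f 0) + b * (Gf g (2 * k) - Gf g 0)) by ring.
    rewrite f2, g2. field.
Qed.

Lemma good_zero m : good m (fun _ => 0) 0.
Proof.
  assert (forall i, lt_mass (fun _ => 0) i = 0) by (induction i; simpl; lra).
  split; intros; unfold Gf; rewrite !H; lra.
Qed.

Lemma good_sum m N (w : nat -> R) (F : nat -> nat -> R) (s : nat -> R) :
  (forall j, (1 <= j <= N)%nat -> good m (F j) (s j) /\ 0 <= w j) ->
  good m (fun n => sumR N (fun j => w j * F j n)) (sumR N (fun j => w j * s j)).
Proof.
  induction N; intros H.
  - simpl. apply good_zero.
  - simpl.
    destruct (H (S N)) as [h1 h2]; [lia|].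
    assert (IH : good m (fun n => sumR N (fun j => w j * F j n)) (sumR N (fun j => w j * s j))).
    { apply IHN. intros j hj. apply H. lia. }
    pose proof (good_lin _ _ _ _ _ 1 (w (S N)) IH h1 ltac:(lra) h2) as G.
    replace (sumR N (fun j => w j * s j) + w (S N) * s (S N))
      with (1 * sumR N (fun j => w j * s j) + w (S N) * s (S N)) by ring.
    eapply good_ext; [|exact G]. intros n; simpl. ring.
Qed.

Lemma good_from_vals m f s :
  (forall k, (f (2 * k)%nat + f (2 * k + 1)%nat) / 2 <= s / 2) ->
  (forall k, (f (2 * k)%nat + 2 * f (2 * k + 1)%nat + f (2 * S k)%nat) / 2 <= s) ->
  (forall k, (k < m)%nat -> (f (2 * k)%nat + 2 * f (2 * k + 1)%nat + f (2 * S k)%nat) / 2 = s) ->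
  good m f s.
Proof.
  intros h1 h2 h3.
  assert (step : forall n, Gf f (S n) = Gf f n + (f n + f (S n)) / 2).
  { intros n; unfold Gf; simpl. field. }
  assert (ev : forall k, Gf f (2 * S k) = Gf f (2 * k) + (f (2 * k)%nat + 2 * f (2 * k + 1)%nat + f (2 * S k)%nat) / 2).
  { intros k. replace (2 * S k)%nat with (S (S (2 * k))) by lia.
    rewrite !step. replace (S (2 * k)) with (2 * k + 1)%nat by lia. field. }
  assert (od : forall k, Gf f (2 * k + 1) = Gf f (2 * k) + (f (2 * k)%nat + f (2 * k + 1)%nat) / 2).
  { intros k. replace (2 * k + 1)%nat with (S (2 * k)) by lia. rewrite step. reflexivity. }
  assert (E1 : forall k, Gf f (2 * k) - Gf f 0 <= s * INR k).
  { induction k. simpl. lra. rewrite ev, S_INR. specialize (h2 k). lra. }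
  assert (E2 : forall k, (k <= m)%nat -> Gf f (2 * k) - Gf f 0 = s * INR k).
  { induction k; intros hk. simpl. lra. rewrite ev, S_INR. rewrite (h3 k) by lia.
    specialize (IHk ltac:(lia)). lra. }
  split.
  - intros i. destruct (Nat.Even_or_Odd i) as [[k ->]|[k ->]].
    + rewrite mult_INR. simpl (INR 2). specialize (E1 k). lra.
    + rewrite od, plus_INR, mult_INR. simpl (INR 2). simpl (INR 1).
      specialize (E1 k); specialize (h1 k). lra.
  - intros k hk. rewrite E2 by auto. rewrite mult_INR. simpl (INR 2). field.
Qed.

Lemma odd2k k : Nat.odd (2 * k) = false.
Proof. rewrite Nat.odd_mul. reflexivity. Qed.
Lemma even2k k : Nat.even (2 * k) = true.
Proof. rewrite Nat.even_mul. reflexivity. Qed.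
Lemma odd2k1 k : Nat.odd (2 * k + 1) = true.
Proof. replace (2 * k + 1)%nat with (S (2 * k)) by lia. rewrite Nat.odd_succ. apply even2k. Qed.
Lemma even2k1 k : Nat.even (2 * k + 1) = false.
Proof. replace (2 * k + 1)%nat with (S (2 * k)) by lia. rewrite Nat.even_succ. apply odd2k. Qed.

Ltac bdestr :=
  repeat match goal with
  | |- context [Nat.leb ?a ?b] => destruct (Nat.leb_spec a b)
  | |- context [Nat.ltb ?a ?b] => destruct (Nat.ltb_spec a b)
  | |- context [Nat.eqb ?a ?b] => destruct (Nat.eqb_spec a b)
  end; cbn [andb].

Lemma UO_even M k : UO M (2 * k) = 0.
Proof. unfold UO. rewrite odd2k. reflexivity. Qed.
Lemma UO_odd M k : UO M (2 * k + 1) = if Nat.ltb k M then / INR M else 0.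
Proof. unfold UO. rewrite odd2k1. simpl. bdestr; auto; exfalso; lia. Qed.
Lemma UE_even M k : UE M (2 * k) = if Nat.leb k M then / INR (M + 1) else 0.
Proof. unfold UE. rewrite even2k. simpl. bdestr; auto; exfalso; lia. Qed.
Lemma UE_odd M k : UE M (2 * k + 1) = 0.
Proof. unfold UE. rewrite even2k1. reflexivity. Qed.
Lemma V_even j m k : V j m (2 * k) = if andb (Nat.leb j k) (Nat.leb k m) then 2 / INR (2 * m + 1) else 0.
Proof. unfold V. rewrite odd2k, Nat.div2_double. reflexivity. Qed.
Lemma V_odd j m k : V j m (2 * k + 1) =
  if Nat.ltb (k + 1) j then 2 / INR (2 * m + 1) else if Nat.eqb (k + 1) j then 1 / INR (2 * m + 1) else 0.
Proof. unfold V. rewrite odd2k1. replace (2 * k + 1 + 1)%nat with (2 * (k + 1))%nat by lia.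
  rewrite Nat.div2_double. reflexivity. Qed.

Lemma good_UO m M : (1 <= M)%nat -> (m <= M)%nat -> good m (UO M) (/ INR M).
Proof.
  intros h1 h2. assert (hp : 0 < / INR M) by (apply Rinv_0_lt_compat, lt_0_INR; lia).
  apply good_from_vals; intros k; [ | | intros hk]; rewrite !UO_even, UO_odd; bdestr; try (exfalso; lia); lra.
Qed.

Lemma good_UE m : (1 <= m)%nat -> good m (UE m) (/ INR (m + 1)).
Proof.
  intros h1. assert (hp : 0 < / INR (m + 1)) by (apply Rinv_0_lt_compat, lt_0_INR; lia).
  apply good_from_vals; intros k; [ | | intros hk]; rewrite !UE_even, UE_odd; bdestr; try (exfalso; lia); lra.
Qed.

Lemma good_V m j : (1 <= j <= m)%nat -> good m (V j m) (2 / INR (2 * m + 1)).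
Proof.
  intros h1. assert (hp : 0 < / INR (2 * m + 1)) by (apply Rinv_0_lt_compat, lt_0_INR; lia).
  unfold Rdiv in *.
  apply good_from_vals; intros k; [ | | intros hk]; rewrite !V_even, V_odd; bdestr; unfold Rdiv in *; try (exfalso; lia); lra.
Qed.

Lemma sumR_ext n f g : (forall j, (1 <= j <= n)%nat -> f j = g j) -> sumR n f = sumR n g.
Proof. induction n; intros H; simpl; auto. rewrite IHn by (intros; apply H; lia). rewrite H by lia. reflexivity. Qed.
Lemma sumR_scal n (w : nat -> R) K : sumR n (fun j => w j * K) = sumR n w * K.
Proof. induction n; simpl. ring. rewrite IHn. ring. Qed.
Lemma sumR_zero n : sumR n (fun _ => 0) = 0.
Proof. induction n; simpl; auto. rewrite IHn. ring. Qed.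

Lemma good_add m f g s t : good m f s -> good m g t -> good m (fun n => f n + g n) (s + t).
Proof. intros A B. pose proof (good_lin _ _ _ _ _ 1 1 A B ltac:(lra) ltac:(lra)) as G.
  replace (s + t) with (1 * s + 1 * t) by ring. eapply good_ext; [|exact G]. intros; simpl; ring. Qed.
Lemma good_scal m f s a : good m f s -> 0 <= a -> good m (fun n => a * f n) (a * s).
Proof. intros A ha. pose proof (good_lin _ _ _ _ _ a 0 A (good_zero m) ha ltac:(lra)) as G.
  replace (a * s) with (a * s + 0 * 0) by ring. eapply good_ext; [|exact G]. intros; simpl; ring. Qed.
Lemma good_eq m f s t : good m f s -> s = t -> good m f t.
Proof. intros; subst; auto. Qed.

Lemma le_div x y z : 0 < z -> x * z <= y -> x <= y / z.
Proof. intros hz h. replace x with (x * z / z) by (field; lra). unfold Rdiv.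
  apply Rmult_le_compat_r; auto. left; apply Rinv_0_lt_compat; auto. Qed.
Lemma div_le x y z : 0 < z -> x <= y / z -> x * z <= y.
Proof. intros hz h. replace y with (y / z * z) by (field; lra).
  apply Rmult_le_compat_r; lra. Qed.

Lemma alg_a M a lamO lamE L K v2 : M >= 1 -> v2 > 0 ->
  lamO + lamE + L + K = 1 ->
  (M + 1 - a) / (M * (M + 1)) - 2 / v2 =
     lamE * ((1 - a) / (M * (M + 1))) + K * (1 / (M + 1) * ((1 - a) / M - a / (M + 1))) ->
  lamO * ((1 - a) * / M + a * / (M + 1)) + lamE * ((1 - a) * / (M + 1) + a * / (M + 1))
  + L * (a * ((2 * M + 1) / (M + 1)) * (2 / (2 * M + 1)) + (1 - a * ((2 * M + 1) / (M + 1))) * / M)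
  + K * (a * ((2 * M + 1) / (M + 1)) * (2 / (2 * M + 1)) + (1 - a * ((2 * M + 1) / (M + 1))) * / (M + 1))
  = 2 / v2.
Proof.
  intros hM hv hs he.
  replace (2 / v2) with ((M + 1 - a) / (M * (M + 1)) - (lamE * ((1 - a) / (M * (M + 1))) + K * (1 / (M + 1) * ((1 - a) / M - a / (M + 1))))) by lra.
  replace lamO with (1 - lamE - L - K) by lra.
  field. lra.
Qed.

Lemma alg_b M a lamO lamE L v2 : M >= 1 -> v2 > 0 ->
  lamO + lamE + L = 1 ->
  (M + 1 - a) / (M * (M + 1)) - 2 / v2 = lamE * ((1 - a) / (M * (M + 1))) ->
  lamO * ((1 - a) * / M + a * / (M + 1)) + lamE * ((1 - a) * / (M + 1) + a * / (M + 1))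
  + L * ((1 - a) * ((2 * M + 1) / M) * (2 / (2 * M + 1)) + (1 - (1 - a) * ((2 * M + 1) / M)) * / (M + 1))
  = 2 / v2.
Proof.
  intros hM hv hs he.
  replace (2 / v2) with ((M + 1 - a) / (M * (M + 1)) - lamE * ((1 - a) / (M * (M + 1)))) by lra.
  replace lamO with (1 - lamE - L) by lra.
  field. lra.
Qed.

Lemma INR_m1 m : INR (m + 1) = INR m + 1.
Proof. rewrite plus_INR; simpl; ring. Qed.
Lemma INR_2m1 m : INR (2 * m + 1) = 2 * INR m + 1.
Proof. rewrite plus_INR, mult_INR; simpl; ring. Qed.

Lemma Gf_ext f g n : (forall k, f k = g k) -> Gf f n = Gf g n.
Proof. intros H. unfold Gf. rewrite (lt_mass_ext f g) by auto. rewrite H. reflexivity. Qed.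

Lemma dirac0_Gf n : Gf (dirac 0) n = if Nat.eqb n 0 then 1/2 else 1.
Proof.
  unfold Gf. destruct n. simpl. unfold dirac; simpl. field.
  assert (lt_mass (dirac 0) (S n) = 1).
  { induction n. simpl. unfold dirac; simpl. ring. simpl in *. rewrite IHn. unfold dirac; simpl. ring. }
  rewrite H. unfold dirac; simpl. field.
Qed.

Lemma UE_pair m n : (n <= 2 * m)%nat -> UE m n + UE m (S n) = / INR (m + 1).
Proof.
  intros hn. destruct (Nat.Even_or_Odd n) as [[k ->]|[k ->]].
  - replace (S (2 * k)) with (2 * k + 1)%nat by lia. rewrite UE_even, UE_odd. bdestr; try (exfalso; lia). ring.
  - replace (S (2 * k + 1)) with (2 * S k)%nat by lia. rewrite UE_even, UE_odd. bdestr; try (exfalso; lia). ring.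
Qed.

Lemma UE_Gf_exact m n : (n <= 2 * m + 1)%nat -> Gf (UE m) n = (INR n + 1) / (2 * INR (m + 1)).
Proof.
  assert (hp : 0 < INR (m + 1)) by (apply lt_0_INR; lia).
  induction n; intros hn.
  - unfold Gf; simpl. change (UE m 0) with (UE m (2 * 0)). rewrite UE_even. simpl. field. lra.
  - replace (Gf (UE m) (S n)) with (Gf (UE m) n + (UE m n + UE m (S n)) / 2) by (unfold Gf; simpl; field).
    rewrite IHn by lia. rewrite UE_pair by lia. rewrite S_INR. field. lra.
Qed.

Lemma UE_Gf_le m n : (1 <= m)%nat -> Gf (UE m) n <= (INR n + 1) / (2 * INR (m + 1)).
Proof.
  intros hm. assert (hp : 0 < INR (m + 1)) by (apply lt_0_INR; lia).
  destruct (good_UE m hm) as [h _]. specialize (h n).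
  rewrite (UE_Gf_exact m 0) in h by lia. simpl in h.
  replace ((INR n + 1) / (2 * INR (m + 1))) with ((0 + 1) / (2 * INR (m + 1)) + / INR (m + 1) * INR n / 2) by (field; lra).
  lra.
Qed.

Lemma UO_far M n : (2 * M <= n)%nat -> UO M n = 0.
Proof. intros h. unfold UO. destruct (Nat.ltb_spec n (2 * M)); [exfalso; lia|]. rewrite andb_false_r. reflexivity. Qed.
Lemma UE_far M n : (2 * M < n)%nat -> UE M n = 0.
Proof. intros h. unfold UE. destruct (Nat.leb_spec n (2 * M)); [exfalso; lia|]. rewrite andb_false_r. reflexivity. Qed.
Lemma V_far j m n : (j <= m)%nat -> (2 * m + 2 <= n)%nat -> V j m n = 0.
Proof.
  intros hj hn. destruct (Nat.Even_or_Odd n) as [[k ->]|[k ->]].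
  - rewrite V_even. bdestr; try (exfalso; lia); reflexivity.
  - rewrite V_odd. bdestr; try (exfalso; lia); reflexivity.
Qed.
Lemma V_zero j m : (1 <= j)%nat -> V j m 0 = 0.
Proof. intros h. change (V j m 0) with (V j m (2 * 0)). rewrite V_even. bdestr; try (exfalso; lia); reflexivity. Qed.

Lemma series_eq_const (p F : nat -> R) (M : R) :
  strategy p -> (forall n, p n * F n = p n * M) -> Series (fun n => p n * F n) = M.
Proof.
  intros [_ [hs _]] H. rewrite (Series_ext _ (fun n => M * p n)).
  rewrite Series_scal_l, (is_series_unique _ _ hs). ring.
  intros n; rewrite H; ring.
Qed.

Theorem lemma6
  (v1 v2 : R) (m : nat) (alpha b : R)
  (X Y : nat -> R)
  (lamO lamE : R) (lam kap : nat -> R)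
  (hv : v1 >= v2) (hv2 : v2 > 0) (hm : (1 <= m)%nat)
  (ha : 0 < alpha < 1) (hb : 0 < b <= INR m)
  (hval : INR m * (INR m + 1) / b = v1 / 2)
  (hlotto : lotto_Nash (INR m + alpha) b X Y)
  (hY : forall n, Y n = (1 - b / INR m) * dirac 0 n + b / INR m * UE m n)
  (hXa : alpha <= (INR m + 1) / (2 * INR m + 1) ->
     forall n, X n =
       lamO * ((1 - alpha) * UO m n + alpha * UO (m + 1) n)
     + lamE * ((1 - alpha) * UE m n + alpha * UO (m + 1) n)
     + sumR m (fun j => lam j *
         (alpha * ((2 * INR m + 1) / (INR m + 1)) * V j m n
          + (1 - alpha * ((2 * INR m + 1) / (INR m + 1))) * UO m n))
     + sumR m (fun j => kap j *
         (alpha * ((2 * INR m + 1) / (INR m + 1)) * V j m n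
          + (1 - alpha * ((2 * INR m + 1) / (INR m + 1))) * UE m n)))
  (hXb : (INR m + 1) / (2 * INR m + 1) < alpha ->
     (forall n, X n =
       lamO * ((1 - alpha) * UO m n + alpha * UO (m + 1) n)
     + lamE * ((1 - alpha) * UE m n + alpha * UO (m + 1) n)
     + sumR m (fun j => lam j *
         ((1 - alpha) * ((2 * INR m + 1) / INR m) * V j m n
          + (1 - (1 - alpha) * ((2 * INR m + 1) / INR m)) * UO (m + 1) n)))
     /\ (forall j, (1 <= j <= m)%nat -> kap j = 0))
  (hnn : 0 <= lamO /\ 0 <= lamE /\
     (forall j, (1 <= j <= m)%nat -> 0 <= lam j /\ 0 <= kap j))
  (hsum : lamO + lamE + sumR m lam + sumR m kap = 1)
  (hgt : INR m > b -> lamE = 0 /\ sumR m kap = 0)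
  (heq : (INR m + 1 - alpha) / (INR m * (INR m + 1)) - 2 / v2 =
     lamE * ((1 - alpha) / (INR m * (INR m + 1)))
     + sumR m (fun j => kap j * (1 / (INR m + 1)) *
         ((1 - alpha) / INR m - alpha / (INR m + 1)))) :
  allpay_Nash v1 v2 X Y.
Proof.
  destruct hlotto as [hXs [hXm [hYs [hYm _]]]].
  pose proof (le_INR 1 m hm) as hM. simpl in hM.
  assert (hm1 : INR (m + 1) = INR m + 1) by apply INR_m1.
  assert (hm2 : INR (2 * m + 1) = 2 * INR m + 1) by apply INR_2m1.
  assert (GUO : good m (UO m) (/ INR m)) by (apply good_UO; lia).
  assert (GUO1 : good m (UO (m + 1)) (/ (INR m + 1))) by (rewrite <- hm1; apply good_UO; lia).
  assert (GUE : good m (UE m) (/ (INR m + 1))) by (rewrite <- hm1; apply good_UE; lia).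
  assert (GV : forall j, (1 <= j <= m)%nat -> good m (V j m) (2 / (2 * INR m + 1))) by (intros; rewrite <- hm2; apply good_V; lia).
  assert (GX : good m X (2 / v2)).
  { destruct (Rle_or_lt alpha ((INR m + 1) / (2 * INR m + 1))) as [Ha|Ha].
    - pose (ad := alpha * ((2 * INR m + 1) / (INR m + 1))).
      assert (had : 0 <= ad <= 1).
      { unfold ad. split. apply Rmult_le_pos. lra. apply Rlt_le, Rdiv_lt_0_compat; lra.
        apply div_le in Ha; [|lra].
        replace (alpha * ((2 * INR m + 1) / (INR m + 1))) with (alpha * (2 * INR m + 1) / (INR m + 1)) by (field; lra).
        apply Rle_trans with ((INR m + 1) / (INR m + 1)); [|right; field; lra].
        unfold Rdiv. apply Rmult_le_compat_r; auto. left; apply Rinv_0_lt_compat; lra. }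
      pose proof (good_scal _ _ _ lamO (good_lin _ _ _ _ _ (1 - alpha) alpha GUO GUO1 ltac:(lra) ltac:(lra)) ltac:(tauto)) as GA.
      pose proof (good_scal _ _ _ lamE (good_lin _ _ _ _ _ (1 - alpha) alpha GUE GUO1 ltac:(lra) ltac:(lra)) ltac:(tauto)) as GB.
      assert (GC := good_sum m m lam (fun j n => ad * V j m n + (1 - ad) * UO m n)
                  (fun j => ad * (2 / (2 * INR m + 1)) + (1 - ad) * / INR m)).
      assert (GD := good_sum m m kap (fun j n => ad * V j m n + (1 - ad) * UE m n)
                  (fun j => ad * (2 / (2 * INR m + 1)) + (1 - ad) * / (INR m + 1))).
      specialize (GC ltac:(intros j hj; split; [apply good_lin; auto; try lra; apply GV; auto | apply hnn; auto])).
      specialize (GD ltac:(intros j hj; split; [apply good_lin; auto; try lra; apply GV; auto | apply hnn; auto])).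
      pose proof (good_add _ _ _ _ _ (good_add _ _ _ _ _ (good_add _ _ _ _ _ GA GB) GC) GD) as G.
      eapply good_ext. 2: eapply good_eq. 2: exact G.
      + intros n. rewrite (hXa Ha n). unfold ad. reflexivity.
      + unfold ad; rewrite !sumR_scal.
        rewrite (sumR_ext m _ (fun j => kap j * (1 / (INR m + 1) * ((1 - alpha) / INR m - alpha / (INR m + 1))))) in heq by (intros; ring).
        rewrite sumR_scal in heq.
        apply alg_a; auto; lra.
    - destruct (hXb Ha) as [hX hk].
      pose (ad := (1 - alpha) * ((2 * INR m + 1) / INR m)).
      assert (had : 0 <= ad <= 1).
      { unfold ad. split. apply Rmult_le_pos. lra. apply Rlt_le, Rdiv_lt_0_compat; lra.
        assert (h1 : (1 - alpha) * (2 * INR m + 1) <= INR m).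
        { assert (INR m + 1 <= alpha * (2 * INR m + 1)).
          { left. replace (INR m + 1) with ((INR m + 1) / (2 * INR m + 1) * (2 * INR m + 1)) by (field; lra).
            apply Rmult_lt_compat_r; lra. }
          lra. }
        replace ((1 - alpha) * ((2 * INR m + 1) / INR m)) with ((1 - alpha) * (2 * INR m + 1) / INR m) by (field; lra).
        apply Rle_trans with (INR m / INR m); [|right; field; lra].
        unfold Rdiv. apply Rmult_le_compat_r; auto. left; apply Rinv_0_lt_compat; lra. }
      pose proof (good_scal _ _ _ lamO (good_lin _ _ _ _ _ (1 - alpha) alpha GUO GUO1 ltac:(lra) ltac:(lra)) ltac:(tauto)) as GA.
      pose proof (good_scal _ _ _ lamE (good_lin _ _ _ _ _ (1 - alpha) alpha GUE GUO1 ltac:(lra) ltac:(lra)) ltac:(tauto)) as GB.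
      assert (GC := good_sum m m lam (fun j n => ad * V j m n + (1 - ad) * UO (m + 1) n)
                  (fun j => ad * (2 / (2 * INR m + 1)) + (1 - ad) * / (INR m + 1))).
      specialize (GC ltac:(intros j hj; split; [apply good_lin; auto; try lra; apply GV; auto | apply hnn; auto])).
      pose proof (good_add _ _ _ _ _ (good_add _ _ _ _ _ GA GB) GC) as G.
      eapply good_ext. 2: eapply good_eq. 2: exact G.
      + intros n. rewrite (hX n). unfold ad. reflexivity.
      + unfold ad; rewrite !sumR_scal.
        rewrite (sumR_ext m _ (fun j => 0)) in heq by (intros j hj; rewrite hk by auto; ring).
        rewrite (sumR_ext m kap (fun j => 0)) in hsum by (intros j hj; rewrite hk by auto; ring).
        rewrite sumR_zero in heq, hsum.
        apply alg_b; auto; lra. }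
  assert (Xfar : forall n, (2 * m + 2 <= n)%nat -> X n = 0).
  { intros n hn.
    assert (z1 : UO m n = 0) by (apply UO_far; lia).
    assert (z2 : UO (m + 1) n = 0) by (apply UO_far; lia).
    assert (z3 : UE m n = 0) by (apply UE_far; lia).
    destruct (Rle_or_lt alpha ((INR m + 1) / (2 * INR m + 1))) as [Ha|Ha].
    - rewrite (hXa Ha n), z1, z2, z3.
      do 2 (rewrite (sumR_ext m _ (fun _ => 0)) by (intros j hj; rewrite V_far by lia; ring); rewrite sumR_zero).
      ring.
    - destruct (hXb Ha) as [hX _]. rewrite (hX n), z1, z2, z3.
      rewrite !(sumR_ext m _ (fun _ => 0)) by (intros j hj; rewrite V_far by lia; ring).
      rewrite sumR_zero. ring. }
  assert (X0 : b = INR m \/ X 0%nat = 0).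
  { destruct (Req_dec b (INR m)) as [e|ne]; [left; auto|right].
    destruct (hgt ltac:(lra)) as [e1 e2].
    assert (z1 : UO m 0 = 0) by (apply (UO_even m 0%nat)).
    assert (z2 : UO (m + 1) 0 = 0) by (apply (UO_even (m + 1) 0%nat)).
    destruct (Rle_or_lt alpha ((INR m + 1) / (2 * INR m + 1))) as [Ha|Ha].
    - rewrite (hXa Ha 0%nat), z1, z2, e1.
      rewrite (sumR_ext m _ (fun _ => 0)) by (intros j hj; rewrite V_zero by lia; ring); rewrite sumR_zero.
      rewrite (sumR_ext m _ (fun j => kap j * ((1 - alpha * ((2 * INR m + 1) / (INR m + 1))) * UE m 0%nat))) by (intros j hj; rewrite V_zero by lia; ring).
      rewrite sumR_scal, e2. ring.
    - destruct (hXb Ha) as [hX _]. rewrite (hX 0%nat), z1, z2, e1.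
      rewrite (sumR_ext m _ (fun _ => 0)) by (intros j hj; rewrite V_zero by lia; ring).
      rewrite sumR_zero. ring. }
  assert (Xb := strat_bounds X hXs). assert (Yb := strat_bounds Y hYs).
  assert (hq : v1 * (b / INR m) = 2 * (INR m + 1)).
  { assert (hv1e : v1 = 2 * (INR m * (INR m + 1) / b)) by lra. rewrite hv1e. field. lra. }
  assert (hq0 : 0 <= 1 - b / INR m).
  { apply Rle_trans with (INR m / INR m - b / INR m); [|right; field; lra].
    unfold Rdiv. rewrite <- Rmult_minus_distr_r. apply Rmult_le_pos. lra. left; apply Rinv_0_lt_compat; lra. }
  assert (hv1 : 0 <= v1) by lra.
  assert (GY : forall n, Gf Y n = (1 - b / INR m) * Gf (dirac 0) n + b / INR m * Gf (UE m) n).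
  { intros n. rewrite <- Gf_lin. apply Gf_ext. apply hY. }
  set (M1 := v1 * (1 - b / INR m) + 1).
  set (F1 := fun n => v1 * lt_mass Y n + v1 / 2 * Y n - INR n).
  assert (F1G : forall n, F1 n = v1 * Gf Y n - INR n) by (intros; unfold F1, Gf; field).
  assert (F1le : forall n, F1 n <= M1).
  { intros n. rewrite F1G, GY, dirac0_Gf. unfold M1.
    replace (v1 * ((1 - b / INR m) * (if Nat.eqb n 0 then 1 / 2 else 1) + b / INR m * Gf (UE m) n))
      with ((v1 * (1 - b / INR m)) * (if Nat.eqb n 0 then 1 / 2 else 1) + (v1 * (b / INR m)) * Gf (UE m) n) by ring.
    rewrite hq.
    assert (hu := UE_Gf_le m n hm). rewrite hm1 in hu.
    assert (hu' : 2 * (INR m + 1) * Gf (UE m) n <= INR n + 1).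
    { apply div_le in hu; [|lra]. lra. }
    assert (0 <= v1 * (1 - b / INR m)) by (apply Rmult_le_pos; lra).
    destruct (Nat.eqb n 0); nra. }
  assert (F1eq : forall n, X n * F1 n = X n * M1).
  { intros n. destruct (Nat.eq_dec n 0) as [->|nz].
    - destruct X0 as [e|e]; [|rewrite e; ring].
      rewrite F1G, GY, dirac0_Gf. simpl Nat.eqb. cbv iota.
      rewrite (UE_Gf_exact m 0%nat) by lia. unfold M1.
      assert (hbm : b / INR m = 1) by (rewrite e; field; lra).
      rewrite hbm in *. rewrite hm1. simpl INR.
      assert (hv1v : v1 = 2 * (INR m + 1)) by lra. rewrite hv1v. field. lra.
    - destruct (le_lt_dec n (2 * m + 1)) as [hn|hn]; [|rewrite Xfar by lia; ring].
      f_equal. rewrite F1G, GY, dirac0_Gf. destruct (Nat.eqb_spec n 0); [lia|].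
      rewrite (UE_Gf_exact m n hn). unfold M1. rewrite hm1.
      replace (v1 * ((1 - b / INR m) * 1 + b / INR m * ((INR n + 1) / (2 * (INR m + 1)))))
        with (v1 * (1 - b / INR m) + (v1 * (b / INR m)) * ((INR n + 1) / (2 * (INR m + 1)))) by ring.
      rewrite hq. field. lra. }
  assert (P1E : forall p, strategy p -> ex_series (fun n => p n * F1 n) /\ P1 v1 p Y = Series (fun n => p n * F1 n)).
  { intros p hp. unfold P1, PrGt, PrEq.
    destruct (payoff_series p (lt_mass Y) Y v1 (v1 / 2) hp (fun n => proj1 (Yb n)) (fun n => proj2 (Yb n))) as [e1 e2].
    split; [exact e1|]. rewrite e2. reflexivity. }
  set (M2 := v2 * Gf X 0%nat).
  set (F2 := fun n => v2 * lt_mass X n + v2 / 2 * X n - INR n).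
  assert (P2E : forall q, strategy q -> ex_series (fun n => q n * F2 n) /\ P2 v2 q X = Series (fun n => q n * F2 n)).
  { intros q hqs. unfold P2, PrGt, PrEq.
    rewrite (Series_ext (fun i => X i * q i) (fun i => q i * X i)) by (intros; ring).
    destruct (payoff_series q (lt_mass X) X v2 (v2 / 2) hqs (fun n => proj1 (Xb n)) (fun n => proj2 (Xb n))) as [e1 e2].
    split; [exact e1|]. rewrite e2. reflexivity. }
  assert (F2G : forall n, F2 n = v2 * Gf X n - INR n) by (intros; unfold F2, Gf; field).
  assert (F2le : forall n, F2 n <= M2).
  { intros n. destruct GX as [g1 _]. specialize (g1 n). rewrite F2G. unfold M2.
    apply Rmult_le_compat_l with (r := v2) in g1; [|lra].
    replace (v2 * (2 / v2 * INR n / 2)) with (INR n) in g1 by (field; lra). lra. }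
  assert (F2eq : forall n, Y n * F2 n = Y n * M2).
  { intros n. destruct (Nat.Even_or_Odd n) as [[k ->]|[k ->]].
    - destruct (le_lt_dec k m) as [hk|hk].
      + f_equal. destruct GX as [_ g2]. specialize (g2 k hk). rewrite F2G. unfold M2.
        apply (f_equal (fun t => v2 * t)) in g2.
        replace (v2 * (2 / v2 * INR (2 * k) / 2)) with (INR (2 * k)) in g2 by (field; lra). lra.
      + rewrite hY, UE_even. unfold dirac. bdestr; try (exfalso; lia). ring.
    - rewrite hY, UE_odd. unfold dirac. bdestr; try (exfalso; lia). ring. }
  unfold allpay_Nash. split; [exact hXs|]. split; [exact hYs|]. split.
  - intros p' hp'. destruct (P1E p' hp') as [ex1 e1]. destruct (P1E X hXs) as [_ e2].
    rewrite e1, e2, (series_eq_const X F1 M1 hXs F1eq).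
    apply series_le_const; auto.
  - intros q' hq'. destruct (P2E q' hq') as [ex1 e1]. destruct (P2E Y hYs) as [_ e2].
    rewrite e1, e2, (series_eq_const Y F2 M2 hYs F2eq).
    apply series_le_const; auto.
Qed.
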